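(* Let $\lambda>0$, let $f(x)=\lambda e^{-\lambda x}$ ($x\geq 0$) be the exponential density with hazard rate $\lambda$, and let $X$ have the $\Gamma(n,\lambda)$ distribution (density $\lambda^n x^{n-1}e^{-\lambda x}/(n-1)!$) with integer $n\geq 2$. For every integer $s\geq 2$, the density $g_s$ of the $s$-iterated distribution induced by $X$ satisfies $$g_s(x)=f_s^{n*}(x)=\frac{n-1}{n+s-2}\,f\ast f_s^{(n-1)*}(x)+\frac{s-1}{n+s-2}\,f(x),\qquad x\geq 0.$$
   Context: For a nonnegative absolutely continuous random variable $Y$ with density $f_Y$, set $\overline{T}_{Y,0}=f_Y$, $\mu_{Y,0}=1$, and for integers $s\geq 1$ define recursively $\overline{T}_{Y,s}(x)=\frac{1}{\mu_{Y,s-1}}\int_x^\infty\overline{T}_{Y,s-1}(t)\,dt$ and $\mu_{Y,s}=\int_0^\infty\overline{T}_{Y,s}(t)\,dt$. $\overline{T}_{Y,s}$ is the tail of the $s$-iterated distribution induced by $Y$, whose density is $\overline{T}_{Y,s-1}/\mu_{Y,s-1}$. For $k\geq 1$, $f_s^{k*}$ denotes the density of the $s$-iterated distribution induced by $S_k=X_1+\cdots+X_k$, where $X_i$ are i.i.d. with density $f$ (so $S_k\sim\Gamma(k,\lambda)$). Convolution: $g\ast h(x)=\int_0^x g(t)h(x-t)\,dt$. *)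

(* Defs.v *)
From Stdlib Require Import Reals Factorial.
From Coquelicot Require Import Coquelicot.
Open Scope R_scope.

Definition int_to_infty (h : R -> R) (a : R) : R :=
  RInt_gen h (at_point a) (Rbar_locally p_infty).

Fixpoint iter_pair (fY : R -> R) (s : nat) : (R -> R) * R :=
  match s with
  | O => (fY, 1)
  | S s' =>
      let (T, m) := iter_pair fY s' in
      let T' := fun x => / m * int_to_infty T x in
      (T', int_to_infty T' 0)
  end.

Definition Tbar (fY : R -> R) (s : nat) : R -> R := fst (iter_pair fY s).
Definition mu (fY : R -> R) (s : nat) : R := snd (iter_pair fY s).

(* density of the s-iterated distribution (s >= 1): Tbar_{Y,s-1} / mu_{Y,s-1} *)
Definition iter_density (fY : R -> R) (s : nat) : R -> R :=
  fun x => Tbar fY (pred s) x / mu fY (pred s).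

Definition conv (g h : R -> R) (x : R) : R :=
  RInt (fun t => g t * h (x - t)) 0 x.

Definition exp_density (lam : R) (x : R) : R :=
  if Rle_dec 0 x then lam * exp (- lam * x) else 0.

Definition gamma_density (k : nat) (lam : R) (x : R) : R :=
  if Rle_dec 0 x then lam ^ k * x ^ (k - 1) * exp (- lam * x) / INR (Factorial.fact (k - 1))
  else 0.

Definition f_iter_conv (lam : R) (s k : nat) : R -> R :=
  iter_density (gamma_density k lam) s.

(* Main.v *)
Require Import Defs.
From Stdlib Require Import Reals Lra Lia Factorial FunctionalExtensionality.
From Coquelicot Require Import Coquelicot.
Open Scope R_scope.

Definition e (lam:R) (j:nat) (x:R) := (lam*x)^j / INR (fact j) * exp (- lam * x).

Fixpoint FF (lam:R) (k m:nat) (x:R) {struct k} : R :=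
  match k with
  | O => e lam m x
  | S k' => (fix G (m:nat) : R := match m with
              | O => FF lam k' O x
              | S m' => G m' + FF lam k' (S m') x end) m
  end.

Lemma FF_S0 lam k x : FF lam (S k) 0 x = FF lam k 0 x.
Proof. reflexivity. Qed.
Lemma FF_SS lam k m x : FF lam (S k) (S m) x = FF lam (S k) m x + FF lam k (S m) x.
Proof. reflexivity. Qed.

Lemma fact_INR_pos j : 0 < INR (fact j).
Proof. apply lt_0_INR. apply lt_O_fact. Qed.

Lemma e_der0 lam x : is_derive (e lam 0) x (- lam * e lam 0 x).
Proof. unfold e. auto_derive; auto. simpl. field. Qed.

Lemma e_derS lam j x : is_derive (e lam (S j)) x (lam * e lam j x - lam * e lam (S j) x).
Proof. unfold e. rewrite fact_simpl, mult_INR, S_INR.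
  pose proof (fact_INR_pos j). pose proof (pos_INR j).
  auto_derive; [split; auto; apply Rgt_not_eq; nra|].
  change (match j with 0%nat => 1 | S _ => INR j + 1 end) with (INR (S j)).
  rewrite S_INR. simpl pow. field. split; lra. Qed.

Lemma FF_der lam : forall k m x, is_derive (FF lam (S k) m) x (- lam * FF lam k m x).
Proof.
  induction k; induction m; intro x.
  - exact (e_der0 lam x).
  - apply is_derive_ext with (f := fun t => FF lam 1 m t + e lam (S m) t).
    { intro t. reflexivity. }
    replace (- lam * FF lam 0 (S m) x) with
      (plus (- lam * FF lam 0 m x) (lam * e lam m x - lam * e lam (S m) x))
      by (simpl; unfold plus; simpl; ring).
    apply (is_derive_plus (fun t => FF lam 1 m t) (e lam (S m))).
    + apply IHm.
    + apply e_derS.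
  - exact (IHk 0%nat x).
  - apply is_derive_ext with (f := fun t => FF lam (S (S k)) m t + FF lam (S k) (S m) t).
    { intro t. reflexivity. }
    replace (- lam * FF lam (S k) (S m) x) with
      (plus (- lam * FF lam (S k) m x) (- lam * FF lam k (S m) x))
      by (simpl; unfold plus; simpl; ring).
    apply (is_derive_plus (fun t => FF lam (S (S k)) m t) (FF lam (S k) (S m))).
    + apply IHm.
    + apply IHk.
Qed.

Lemma exp_pow_n n z : exp (INR n * z) = exp z ^ n.
Proof. induction n. simpl. rewrite Rmult_0_l. apply exp_0.
  rewrite S_INR, Rmult_plus_distr_r, exp_plus, IHn, Rmult_1_l. simpl. ring. Qed.

Lemma exp_bound j y : 0 < y -> y^j * exp(-y) <= INR (S j) ^ (S j) / y.
Proof.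
  intro Hy. set (N := INR (S j)).
  assert (HN : 0 < N) by (apply lt_0_INR; lia).
  assert (Hz : 0 < y / N) by (apply Rdiv_lt_0_compat; lra).
  assert (HE : (y / N) ^ S j <= exp y).
  { replace y with (N * (y / N)) at 2 by (field; lra).
    change (exp (N * (y / N))) with (exp (INR (S j) * (y / N))).
    rewrite exp_pow_n. apply pow_incr. split. lra.
    pose proof (exp_ineq1_le (y/N)). lra. }
  assert (Hp : 0 < (y / N) ^ S j) by (apply pow_lt; lra).
  rewrite exp_Ropp.
  apply Rle_trans with (y ^ j * / ((y / N) ^ S j)).
  { apply Rmult_le_compat_l. apply pow_le; lra. apply Rinv_le_contravar; lra. }
  right. unfold Rdiv. rewrite Rpow_mult_distr, pow_inv. simpl pow.
  assert (y ^ j <> 0) by (apply pow_nonzero; lra).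
  assert (N ^ j <> 0) by (apply pow_nonzero; lra).
  field. repeat split; lra.
Qed.

Lemma e_nonneg lam j x : 0 <= lam -> 0 <= x -> 0 <= e lam j x.
Proof. intros. unfold e. apply Rmult_le_pos. apply Rdiv_le_0_compat.
  apply pow_le. nra. apply fact_INR_pos. left; apply exp_pos. Qed.

Lemma e_lim lam j : 0 < lam -> filterlim (e lam j) (Rbar_locally p_infty) (locally 0).
Proof.
  intro Hl. apply filterlim_locally. intro eps.
  set (K := INR (S j) ^ S j).
  assert (HK : 0 < K) by (apply pow_lt, lt_0_INR; lia).
  exists (K / (lam * eps)). intros x Hx.
  assert (Hle : 0 < lam * eps) by (pose proof (cond_pos eps); nra).
  assert (Hx0 : 0 < x).
  { apply Rle_lt_trans with (2 := Hx). apply Rlt_le, Rdiv_lt_0_compat; lra. }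
  unfold ball; simpl; unfold AbsRing_ball, abs, minus, plus, opp; simpl.
  rewrite Ropp_0, Rplus_0_r.
  rewrite Rabs_right by (apply Rle_ge, e_nonneg; lra).
  assert (Hlx : 0 < lam * x) by nra.
  pose proof (exp_bound j (lam * x) Hlx) as HB. fold K in HB.
  assert (Hf : 1 <= INR (fact j)).
  { apply (le_INR 1). apply lt_O_fact. }
  apply Rle_lt_trans with (K / (lam * x)).
  { unfold e. replace (- lam * x) with (- (lam * x)) by ring.
    apply Rle_trans with ((lam * x) ^ j * exp (- (lam * x))); [|exact HB].
    apply Rmult_le_compat_r. left; apply exp_pos.
    unfold Rdiv. rewrite <- (Rmult_1_r ((lam*x)^j)) at 2.
    apply Rmult_le_compat_l. apply pow_le; lra.
    rewrite <- Rinv_1. apply Rinv_le_contravar; lra. }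
  pose proof (cond_pos eps) as Heps.
  assert (HK2 : K < x * (lam * eps)).
  { apply (Rmult_lt_compat_r (lam * eps)) in Hx; [|lra].
    replace (K / (lam * eps) * (lam * eps)) with K in Hx by (field; split; lra). exact Hx. }
  apply (Rmult_lt_reg_r (lam * x)); [lra|].
  replace (K / (lam * x) * (lam * x)) with K by (field; lra). nra.
Qed.

Lemma FF_lim lam k m : 0 < lam -> is_lim (FF lam k m) p_infty 0.
Proof.
  intro Hl. revert m. induction k; induction m.
  - apply (e_lim lam 0 Hl).
  - apply (e_lim lam (S m) Hl).
  - apply (IHk 0%nat).
  - replace (Finite 0) with (Finite (0 + 0)) by (f_equal; ring).
    apply (is_lim_plus' (FF lam (S k) m) (FF lam k (S m))); auto.
Qed.

Lemma FF_ex_derive lam k m x : ex_derive (FF lam k m) x.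
Proof.
  destruct k.
  - destruct m. eexists; apply (e_der0 lam x). eexists; apply (e_derS lam m x).
  - eexists; apply FF_der.
Qed.

Lemma FF_cont lam k m x : continuous (FF lam k m) x.
Proof. apply (ex_derive_continuous (K:=R_AbsRing) (V:=R_NormedModule)), FF_ex_derive. Qed.

Lemma tail lam k m a : 0 < lam ->
  is_RInt_gen (FF lam k m) (at_point a) (Rbar_locally p_infty) (FF lam (S k) m a / lam).
Proof.
  intro Hl.
  set (f := fun t => (- / lam) * FF lam (S k) m t).
  assert (Hd : forall t, is_derive f t (FF lam k m t)).
  { intro t. unfold f. replace (FF lam k m t) with (scal (- / lam) (- lam * FF lam k m t)).
    apply (is_derive_scal (FF lam (S k) m)). apply FF_der.
    unfold scal; simpl; unfold mult; simpl. field. lra. }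
  assert (HD : Derive f = FF lam k m).
  { apply functional_extensionality. intro t. apply is_derive_unique, Hd. }
  replace (FF lam (S k) m a / lam) with (0 - f a) by (unfold f; field; lra).
  rewrite <- HD.
  apply is_RInt_gen_Derive.
  - apply filter_forall. intros. eexists; apply Hd.
  - apply filter_forall. intros. rewrite HD. apply FF_cont.
  - intros P HP. apply locally_singleton in HP. exact HP.
  - unfold f. pose proof (is_lim_scal_l (FF lam (S k) m) (-/lam) p_infty 0 (FF_lim lam (S k) m Hl)) as H.
    simpl in H. rewrite Rmult_0_r in H. exact H.
Qed.

Lemma e0_0 lam : e lam 0 0 = 1.
Proof. unfold e. simpl. rewrite Rmult_0_r, exp_0. field. Qed.
Lemma eS_0 lam j : e lam (S j) 0 = 0.
Proof. unfold e. rewrite Rmult_0_r. simpl pow. rewrite Rmult_0_l. unfold Rdiv. ring. Qed.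

Lemma FF_k0 lam k x : FF lam k 0 x = e lam 0 x.
Proof. induction k. reflexivity. rewrite FF_S0. exact IHk. Qed.

Definition Q (k m : nat) : R := INR (fact (m + k)) / (INR (fact k) * INR (fact m)).

Lemma Q_pos k m : 0 < Q k m.
Proof. unfold Q. pose proof (fact_INR_pos (m+k)). pose proof (fact_INR_pos k).
  pose proof (fact_INR_pos m). apply Rdiv_lt_0_compat; nra. Qed.

Lemma Q_pascal k m : Q (S k) m + Q k (S m) = Q (S k) (S m).
Proof.
  unfold Q.
  replace (m + S k)%nat with (S (m + k)) by lia.
  replace (S m + k)%nat with (S (m + k)) by lia.
  replace (S m + S k)%nat with (S (S (m + k))) by lia.
  rewrite (fact_simpl (S (m+k))), (fact_simpl k), (fact_simpl m).
  rewrite !mult_INR, !S_INR, !plus_INR.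
  pose proof (fact_INR_pos (m+k)). pose proof (fact_INR_pos k).
  pose proof (fact_INR_pos m). pose proof (pos_INR m). pose proof (pos_INR k).
  field. repeat split; lra.
Qed.

Lemma FF_at0 lam k m : FF lam (S k) m 0 = Q k m.
Proof.
  revert m. induction k; induction m.
  - simpl. rewrite e0_0. unfold Q. simpl. field.
  - rewrite FF_SS, IHm. simpl FF. rewrite eS_0. unfold Q. rewrite !Nat.add_0_r. simpl (fact 0).
    change (INR 1) with 1. field. split; apply Rgt_not_eq, fact_INR_pos.
  - rewrite FF_S0, IHk. unfold Q. simpl (fact 0). rewrite !Nat.add_0_l. change (INR 1) with 1. field.
    split; apply Rgt_not_eq, fact_INR_pos.
  - rewrite FF_SS, IHm, IHk. apply Q_pascal.
Qed.

Lemma J1 lam k m : INR (S m) * FF lam k (S m) 0 = INR k * FF lam (S k) m 0.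
Proof.
  destruct k.
  - simpl FF. rewrite eS_0. simpl. ring.
  - rewrite !FF_at0. unfold Q.
    replace (m + S k)%nat with (S m + k)%nat by lia.
    rewrite (fact_simpl k), (fact_simpl m), !mult_INR.
    pose proof (fact_INR_pos (S m + k)). pose proof (fact_INR_pos k).
    pose proof (fact_INR_pos m). pose proof (pos_INR m). pose proof (pos_INR k).
    rewrite !S_INR. field. repeat split; lra.
Qed.

Lemma conv_e lam m x :
  is_RInt (fun t => lam * e lam 0 t * e lam m (x - t)) 0 x (e lam (S m) x).
Proof.
  set (G := fun t => - (lam * (x - t)) ^ (S m) / INR (fact (S m)) * exp (- lam * x)).
  replace (e lam (S m) x) with (minus (G x) (G 0)).
  2:{ unfold G, minus, plus, opp, e; simpl. rewrite Rminus_diag, Rminus_0_r.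
      change (fact m + m * fact m)%nat with (fact (S m)).
      rewrite Rmult_0_r, Rmult_0_l. field. apply Rgt_not_eq, fact_INR_pos. }
  apply (is_RInt_derive (V:=R_CompleteNormedModule)).
  - intros t _. unfold G, e. rewrite fact_simpl, mult_INR, S_INR.
    pose proof (fact_INR_pos m). pose proof (pos_INR m).
    auto_derive; [auto|].
    replace (match m with 0%nat => 1 | S _ => INR m + 1 end) with (INR m + 1)
      by (destruct m; simpl; ring).
    simpl pow.
    replace (exp (- lam * x)) with (exp (- lam * t) * exp (- lam * (x - t)))
      by (rewrite <- exp_plus; f_equal; ring).
    simpl (fact 0). change (INR 1) with 1. unfold Rminus. field. lra.
  - intros t _. apply (ex_derive_continuous (K:=R_AbsRing) (V:=R_NormedModule)).
    unfold e. auto_derive. repeat split; auto; apply Rgt_not_eq, fact_INR_pos.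
Qed.

Lemma conv_FF lam x : forall k m,
  is_RInt (fun t => lam * e lam 0 t * FF lam k m (x - t)) 0 x
    (FF lam k (S m) x - FF lam k (S m) 0 * e lam 0 x).
Proof.
  induction k; intro m.
  - simpl FF. rewrite eS_0. replace (e lam (S m) x - 0 * e lam 0 x) with (e lam (S m) x) by ring.
    apply conv_e.
  - induction m.
    + apply is_RInt_ext with (f := fun t => lam * e lam 0 t * FF lam k 0 (x - t)).
      { intros; reflexivity. }
      replace (FF lam (S k) 1 x - FF lam (S k) 1 0 * e lam 0 x)
        with (FF lam k 1 x - FF lam k 1 0 * e lam 0 x).
      apply IHk.
      rewrite !FF_SS, !FF_S0, !FF_k0, e0_0. ring.
    + apply is_RInt_ext with (f := fun t => plus (lam * e lam 0 t * FF lam (S k) m (x - t))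
                                               (lam * e lam 0 t * FF lam k (S m) (x - t))).
      { intros. rewrite FF_SS. unfold plus; simpl. ring. }
      replace (FF lam (S k) (S (S m)) x - FF lam (S k) (S (S m)) 0 * e lam 0 x)
        with (plus (FF lam (S k) (S m) x - FF lam (S k) (S m) 0 * e lam 0 x)
                   (FF lam k (S (S m)) x - FF lam k (S (S m)) 0 * e lam 0 x)).
      apply (is_RInt_plus (V:=R_NormedModule)). apply IHm. apply IHk.
      rewrite !(FF_SS lam k (S m)). unfold plus; simpl. ring.
Qed.

Lemma Tbar_S f s x : Tbar f (S s) x = / mu f s * int_to_infty (Tbar f s) x.
Proof. unfold Tbar, mu. cbn [iter_pair]. destruct (iter_pair f s). reflexivity. Qed.
Lemma mu_S f s : mu f (S s) = int_to_infty (Tbar f (S s)) 0.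
Proof. unfold Tbar, mu. cbn [iter_pair]. destruct (iter_pair f s). reflexivity. Qed.
Lemma Tbar_0 f : Tbar f 0 = f.
Proof. reflexivity. Qed.
Lemma mu_0 f : mu f 0 = 1.
Proof. reflexivity. Qed.


Lemma int_tail lam h c j m a : 0 < lam -> 0 <= a ->
  (forall y, 0 <= y -> h y = c * FF lam j m y) ->
  int_to_infty h a = c * FF lam (S j) m a / lam.
Proof.
  intros Hl Ha Hh. unfold int_to_infty.
  assert (HI : is_RInt_gen h (at_point a) (Rbar_locally p_infty) (c * FF lam (S j) m a / lam)).
  { pose proof (tail lam j m a Hl) as HT.
    apply (is_RInt_gen_scal _ c) in HT.
    assert (HT' : is_RInt_gen (fun y => c * FF lam j m y) (at_point a) (Rbar_locally p_infty)
       (c * (FF lam (S j) m a / lam))) by exact HT.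
    clear HT. rename HT' into HT.
    assert (E : c * (FF lam (S j) m a / lam) = c * FF lam (S j) m a / lam)
      by (unfold Rdiv; ring).
    rewrite E in HT. 
    refine (is_RInt_gen_ext _ _ _ _ HT).
    apply Filter_prod with (fun u => u = a) (fun b => a < b).
    + reflexivity.
    + exists a. auto.
    + intros u b Hu Hb y Hy. simpl in Hu, Hb, Hy. subst u.
      rewrite Rmin_left in Hy by lra. rewrite Hh by lra. reflexivity. }
  exact (is_RInt_gen_unique h _ HI).
Qed.

Lemma inv lam m k : 0 < lam -> exists c, 0 < c /\
  (forall x, 0 <= x -> Tbar (gamma_density (S m) lam) k x = c * FF lam k m x) /\
  mu (gamma_density (S m) lam) k = c * FF lam (S k) m 0 / lam.
Proof.
  intro Hl. induction k.
  - exists lam. split; [lra|split].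
    + intros x Hx. rewrite Tbar_0. unfold gamma_density. destruct (Rle_dec 0 x); [|lra].
      simpl FF. unfold e. replace (S m - 1)%nat with m by lia.
      change (lam ^ S m) with (lam * lam ^ m). rewrite Rpow_mult_distr.
      field. apply Rgt_not_eq, fact_INR_pos.
    + rewrite mu_0, FF_at0. unfold Q. rewrite Nat.add_0_r. simpl (fact 0).
      change (INR 1) with 1. field. split; [apply Rgt_not_eq, fact_INR_pos| lra].
  - destruct IHk as [c [Hc [HT Hm]]].
    pose proof (Q_pos k m) as HQ. rewrite <- (FF_at0 lam) in HQ.
    assert (HT' : forall x, 0 <= x -> Tbar (gamma_density (S m) lam) (S k) x
                     = / FF lam (S k) m 0 * FF lam (S k) m x).
    { intros x Hx. rewrite Tbar_S, Hm, (int_tail lam _ c k m x Hl Hx HT). field. lra. }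
    exists (/ FF lam (S k) m 0). split; [apply Rinv_0_lt_compat; lra|split].
    + exact HT'.
    + rewrite mu_S. rewrite (int_tail lam _ _ (S k) m 0 Hl (Rle_refl 0) HT'). reflexivity.
Qed.

Lemma dens lam m k x : 0 < lam -> 0 <= x ->
  f_iter_conv lam (S k) (S m) x = lam * FF lam k m x / FF lam (S k) m 0.
Proof.
  intros Hl Hx. unfold f_iter_conv, iter_density. simpl pred.
  destruct (inv lam m k Hl) as [c [Hc [HT Hm]]].
  pose proof (Q_pos k m) as HQ. rewrite <- (FF_at0 lam) in HQ.
  rewrite HT, Hm by exact Hx. field. lra.
Qed.

Theorem proposition2 (lam : R) (n s : nat) :
  0 < lam -> (2 <= n)%nat -> (2 <= s)%nat ->
  forall x : R, 0 <= x ->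
    iter_density (gamma_density n lam) s x = f_iter_conv lam s n x /\
    f_iter_conv lam s n x =
      INR (n - 1) / INR (n + s - 2) * conv (exp_density lam) (f_iter_conv lam s (n - 1)) x
      + INR (s - 1) / INR (n + s - 2) * exp_density lam x.
Proof.
  intros Hl Hn Hs x Hx. split; [reflexivity|].
  destruct n as [|[|m]]; try lia. destruct s as [|[|k]]; try lia.
  replace (S (S m) - 1)%nat with (S m) by lia.
  replace (S (S k) - 1)%nat with (S k) by lia.
  replace (S (S m) + S (S k) - 2)%nat with (S m + S k)%nat by lia.
  rewrite (dens lam (S m) (S k) x Hl Hx).
  assert (Hexp : forall t, 0 <= t -> exp_density lam t = lam * e lam 0 t).
  { intros t Ht. unfold exp_density, e. destruct (Rle_dec 0 t); [|lra]. simpl. field. }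
  pose proof (Q_pos (S k) m) as HB. rewrite <- (FF_at0 lam) in HB.
  assert (Hc : conv (exp_density lam) (f_iter_conv lam (S (S k)) (S m)) x =
     lam / FF lam (S (S k)) m 0 * (FF lam (S k) (S m) x - FF lam (S k) (S m) 0 * e lam 0 x)).
  { unfold conv.
    rewrite (RInt_ext _ (fun t => lam / FF lam (S (S k)) m 0 * (lam * e lam 0 t * FF lam (S k) m (x - t)))).
    - pose proof (conv_FF lam x (S k) m) as H.
      pose proof (is_RInt_scal _ _ _ (lam / FF lam (S (S k)) m 0) _ H) as H2.
      exact (is_RInt_unique _ _ _ _ H2).
    - intros t Ht. rewrite Rmin_left in Ht by lra. rewrite Rmax_right in Ht by lra.
      rewrite Hexp by lra. rewrite (dens lam m (S k) (x - t)) by lra. match goal with |- ?a = ?b => change (@eq R a b) end. field. lra. }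
  rewrite Hc, Hexp by exact Hx.
  pose proof (J1 lam (S k) m) as HJ.
  pose proof (FF_SS lam (S k) m 0) as HA.
  rewrite HA.
  assert (HS : 0 < INR (S m)) by (apply lt_0_INR; lia).
  assert (HC : FF lam (S k) (S m) 0 = INR (S k) * FF lam (S (S k)) m 0 / INR (S m)).
  { rewrite <- HJ. field. lra. }
  rewrite HC. rewrite plus_INR. rewrite !S_INR in *.
  pose proof (pos_INR k). pose proof (pos_INR m).
  field. repeat split; try lra. nra.
Qed.
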